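(* Let $N\ge2$, let $\rho_1,\dots,\rho_N$ be two-qubit density operators ($\rho_k$ on qubits $((k-1)_2,k_1)$) with fidelities $F_k=\langle\Psi_{00}|\rho_k|\Psi_{00}\rangle$, let $\rho_{\mathrm{in}}=\bigotimes_k\rho_k$, and let $\mathcal P$ be any swap-and-correct protocol with non-postselected swapping channel $\Lambda_{\mathcal P}$. Let $F'=\langle\Psi_{00}|\Lambda_{\mathcal P}(\rho_{\mathrm{in}})|\Psi_{00}\rangle$ and $F'_{\mathcal W}=\langle\Psi_{00}|\Lambda_{\mathcal P}(\bigotimes_{k}\mathcal W(\rho_k))|\Psi_{00}\rangle$. If $\epsilon_k=1-F_k<\epsilon$ for all $k$, then $$|F'-F'_{\mathcal W}|\le\binom N2\epsilon^2+\mathcal O(N^3\epsilon^3).$$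
   Context: Bell states: $|\Psi_{mn}\rangle=(I_2\otimes X^mZ^n)\tfrac{1}{\sqrt2}(|00\rangle+|11\rangle)$. Werner twirl: $\mathcal W(\rho)=\frac{4F-1}{3}|\Psi_{00}\rangle\langle\Psi_{00}|+\frac{1-F}{3}I_4$ with $F=\langle\Psi_{00}|\rho|\Psi_{00}\rangle$. Let $A=\{I,X,Z,XZ\}$. Repeater chain: nodes $0,\dots,N$; end node $0$ holds qubit $0_2$, end node $N$ holds qubit $N_1$, each repeater node $k\in\{1,\dots,N-1\}$ holds qubits $k_1,k_2$. A syndrome $\vec s\in A^{N-1}$ has $s_k=X^mZ^n$ meaning the Bell-state measurement at node $k$ on $(k_1,k_2)$ projected onto $|\Psi_{s_k}\rangle:=|\Psi_{mn}\rangle_{k_1k_2}$. A swap-and-correct protocol is a map $\mathcal P:A^{N-1}\to A^{N+1}$, $\vec s\mapsto(\mathcal P_0(\vec s),\dots,\mathcal P_N(\vec s))$ (Pauli corrections at nodes $0,\dots,N$; for repeater nodes applied to qubit $k_1$ before the BSM) such that (A) for some permutation $\alpha$ of $\{1,\dots,N-1\}$, each $\mathcal P_{\alpha(k)}(\vec s)$ depends only on $s_{\alpha(1)},\dots,s_{\alpha(k-1)}$; (B) for every $\vec s$ the normalised output from $|\Psi_{00}\rangle\langle\Psi_{00}|^{\otimes N}$ is $|\Psi_{00}\rangle\langle\Psi_{00}|$. With $C_{\vec s}$ applying $\mathcal P_0(\vec s)$ to $0_2$, $\mathcal P_N(\vec s)$ to $N_1$ and $\mathcal P_k(\vec s)$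 to $k_1$, set $\Lambda_{\mathcal P,\vec s}(\rho)=\mathrm{Tr}_{\text{repeaters}}[(\bigotimes_{k}|\Psi_{s_k}\rangle\langle\Psi_{s_k}|)C_{\vec s}\rho C_{\vec s}^\dagger]$ and $\Lambda_{\mathcal P}=\sum_{\vec s}\Lambda_{\mathcal P,\vec s}$ (output on $(0_2,N_1)$). The $\mathcal O$-term is as $N\epsilon\to0$. *)

(* Defs.v *)
From HB Require Import structures.
From mathcomp Require Import all_boot all_order all_algebra fingroup perm.
From mathcomp Require Import reals.
From mathcomp Require Import complex.
Set Implicit Arguments.
Unset Strict Implicit.
Unset Printing Implicit Defensive.
Import Order.TTheory GRing.Theory Num.Theory.
Local Open Scope ring_scope.

(* Operators on a finite-dimensional Hilbert space with orthonormal basis   *)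
(* indexed by a finType T: M x y = <x|M|y>.  Vectors: T -> C.                *)
Section Ops.
Variable C : numClosedFieldType.

Definition op (T : finType) := T -> T -> C.

Definition mulop (T : finType) (M N : op T) : op T :=
  fun x y => \sum_(z : T) M x z * N z y.

Definition adjop (T : finType) (M : op T) : op T := fun x y => (M y x)^*.

Definition trop (T : finType) (M : op T) : C := \sum_(x : T) M x x.

Definition idop (T : finType) : op T := fun x y => (x == y)%:R.

Definition proj (T : finType) (v : T -> C) : op T := fun x y => v x * (v y)^*.

Definition is_density (T : finType) (rho : op T) : Prop :=
  [/\ forall x y, rho y x = (rho x y)^*,
      forall v : T -> C, 0 <= \sum_(x : T) \sum_(y : T) (v x)^* * rho x y * v y
    & trop rho = 1].

Definition pI : op bool := fun b b' => (b == b')%:R.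
Definition pX : op bool := fun b b' => (b != b')%:R.
Definition pZ : op bool := fun b b' => if b == b' then (if b then -1 else 1) else 0.

(* A = {I, X, Z, XZ}: the pair (m, n) encodes X^m Z^n *)
Definition A := (bool * bool)%type.
Definition pauli (a : A) : op bool :=
  mulop (if a.1 then pX else pI) (if a.2 then pZ else pI).

(* two-qubit basis (a, b) = |a>|b>, first component = first qubit *)
Definition psi00 : (bool * bool)%type -> C :=
  fun ab => (ab.1 == ab.2)%:R / sqrtC 2%:R.

(* |Psi_mn> = (I (x) X^m Z^n) |Psi_00> *)
Definition psi (a : A) : (bool * bool)%type -> C :=
  fun ab => \sum_(c : bool) pauli a ab.2 c * psi00 (ab.1, c).

Definition fid (rho : op (bool * bool)%type) : C :=
  \sum_(x : (bool * bool)%type) \sum_(y : (bool * bool)%type) (psi00 x)^* * rho x y * psi00 y.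

Definition werner (rho : op (bool * bool)%type) : op (bool * bool)%type :=
  fun x y => (4%:R * fid rho - 1) / 3%:R * proj psi00 x y
           + (1 - fid rho) / 3%:R * idop x y.

(* Chain with N = n.+2 links, nodes 0 .. N ('I_n.+3), repeaters 1 .. N-1
   (indexed by j : 'I_n.+1 <-> node j+1).  Link i : 'I_n.+2 (i.e. rho_{i+1})
   sits on qubits (i_2, (i+1)_1); we label them (i, false) = i_2 and
   (i, true) = (i+1)_1. *)
Definition qubit (n : nat) := ('I_n.+2 * bool)%type.
Definition basis (n : nat) := {ffun qubit n -> bool}.

Definition chain_state n (rhos : 'I_n.+2 -> op (bool * bool)%type) : op (basis n) :=
  fun x y => \prod_(i : 'I_n.+2)
     rhos i (x (i, false), x (i, true)) (y (i, false), y (i, true)).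

Definition syndrome (n : nat) := {ffun 'I_n.+1 -> A}.
Definition protocol (n : nat) := syndrome n -> 'I_n.+3 -> A.

(* node of repeater j : 'I_n.+1 is j+1 *)
Definition repnode n (j : 'I_n.+1) : 'I_n.+3 :=
  lift ord0 (widen_ord (leqnSn n.+1) j).
(* qubits k_1, k_2 of repeater node k = j+1 *)
Definition k1 n (j : 'I_n.+1) : qubit n := (widen_ord (leqnSn n.+1) j, true).
Definition k2 n (j : 'I_n.+1) : qubit n := (lift ord0 j, false).
Definition q0 n : qubit n := (ord0, false).
Definition qN n : qubit n := (ord_max, true).
Definition is_end n (q : qubit n) : bool := (q == q0 n) || (q == qN n).

(* Pauli applied to each qubit by the correction C_s: P_0(s) on 0_2,
   P_k(s) on k_1 for k = 1..N, identity on the k_2 *)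
Definition corr_pauli n (P : protocol n) (s : syndrome n) (q : qubit n) : A :=
  if q.2 then P s (lift ord0 q.1)
  else if q.1 == ord0 then P s ord0 else (false, false).

Definition Cmat n (P : protocol n) (s : syndrome n) : op (basis n) :=
  fun x y => \prod_(q : qubit n) pauli (corr_pauli P s q) (x q) (y q).

Definition Pimat n (s : syndrome n) : op (basis n) :=
  fun x y =>
    (\prod_(j : 'I_n.+1)
        proj (psi (s j)) (x (k1 j), x (k2 j)) (y (k1 j), y (k2 j)))
    * \prod_(q : qubit n | is_end q) (x q == y q)%:R.

Definition ptrace_rep n (M : op (basis n)) : op (bool * bool)%type :=
  fun ab ab' => \sum_(x : basis n) \sum_(y : basis n)
    ([&& x (q0 n) == ab.1, x (qN n) == ab.2,
         y (q0 n) == ab'.1, y (qN n) == ab'.2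
       & [forall q, ~~ is_end q ==> (x q == y q)]])%:R * M x y.

Definition Lambda_s n (P : protocol n) (s : syndrome n) (rho : op (basis n))
  : op (bool * bool)%type :=
  ptrace_rep (mulop (Pimat s) (mulop (mulop (Cmat P s) rho) (adjop (Cmat P s)))).

Definition Lambda n (P : protocol n) (rho : op (basis n)) : op (bool * bool)%type :=
  fun ab ab' => \sum_(s : syndrome n) Lambda_s P s rho ab ab'.

Definition swap_and_correct n (P : protocol n) : Prop :=
  (exists alpha : {perm 'I_n.+1},
     forall (k : 'I_n.+1) (s s' : syndrome n),
       (forall j : 'I_n.+1, (j < k)%N -> s (alpha j) = s' (alpha j)) ->
       P s (repnode (alpha k)) = P s' (repnode (alpha k)))
  /\
  (forall s : syndrome n,
     let out := Lambda_s P s (chain_state (fun _ => proj psi00)) in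
     (fun ab ab' => (trop out)^-1 * out ab ab') = proj psi00).

End Ops.

(* Main.v *)
Require Import Defs.
From HB Require Import structures.
From mathcomp Require Import all_boot all_order all_algebra fingroup perm.
From mathcomp Require Import reals.
From mathcomp Require Import complex.
From mathcomp.algebra_tactics Require Import ring lra.
Set Implicit Arguments.
Unset Strict Implicit.
Unset Printing Implicit Defensive.
Import Order.TTheory GRing.Theory Num.Theory.
Local Open Scope ring_scope.

Local Notation ff := (false, false).
Local Notation ft := (false, true).
Local Notation tf := (true, false).
Local Notation tt := (true, true).

Section Gen.
Variable C : numClosedFieldType.

Definition sg (b : bool) : C := (-1) ^+ b.
Definition kap : C := (sqrtC 2%:R)^-1.
Definition addA (a b : A) : A := (a.1 (+) b.1, a.2 (+) b.2).

Lemma sgC b : (sg b)^* = sg b.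
Proof. by rewrite /sg rmorphXn rmorphN1. Qed.
Lemma sgK b : sg b * sg b = 1.
Proof. by case: b; rewrite /sg ?expr1 ?expr0 ?mulr1 ?mulrNN ?mulr1. Qed.
Lemma sg_addb a b : sg (a (+) b) = sg a * sg b.
Proof. by case: a; case: b; rewrite /sg /= ?expr1 ?expr0 ?mulr1 ?mul1r ?mulrNN ?mulr1. Qed.

Lemma kap_ge0 : 0 <= kap.
Proof. by rewrite /kap invr_ge0 sqrtC_ge0 ler0n. Qed.
Lemma kapC : kap^* = kap.
Proof. exact: geC0_conj kap_ge0. Qed.
Lemma kapK : kap * kap = 2%:R^-1.
Proof. by rewrite /kap -invfM -expr2 sqrtCK. Qed.

Lemma sum_bool (F : bool -> C) : \sum_b F b = F true + F false.
Proof. by rewrite big_bool. Qed.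
Lemma sum_pair (F : bool * bool -> C) :
  \sum_x F x = F (false,false) + F (false,true) + F (true,false) + F (true,true).
Proof.
have -> : \sum_x F x = \sum_a \sum_b F (a,b).
  by rewrite pair_bigA; apply: eq_bigr => -[].
rewrite !big_bool /=.
ring.
Qed.

Lemma pauliE a z u : pauli C a z u = (z (+) a.1 == u)%:R * sg (a.2 && u).
Proof.
rewrite /pauli /mulop big_bool.
by case: a => [[] []]; case: z; case: u;
  rewrite /pX /pI /pZ /sg /= ?expr1 ?expr0 ?mulr0 ?mul0r ?mulr1 ?addr0 ?add0r ?mul1r.
Qed.

Lemma psi00E ab : psi00 C ab = (ab.1 == ab.2)%:R * kap.
Proof. by []. Qed.

Lemma psiE a u : psi C a u = (u.1 == u.2 (+) a.1)%:R * sg (a.2 && u.1) * kap.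
Proof.
rewrite /psi big_bool !pauliE !psi00E.
by case: a => [[] []]; case: u => [[] []]; rewrite /sg /=; ring.
Qed.

Lemma psi_ff u : psi C (false,false) u = psi00 C u.
Proof. by rewrite psiE psi00E /sg /= addbF expr0 mulr1. Qed.

Lemma psiC a u : (psi C a u)^* = psi C a u.
Proof. by rewrite psiE !rmorphM /= conjC_nat sgC kapC. Qed.
Lemma psi00C u : (psi00 C u)^* = psi00 C u.
Proof. by rewrite -psi_ff psiC. Qed.
Lemma pauliC a z u : (pauli C a z u)^* = pauli C a z u.
Proof. by rewrite pauliE rmorphM /= conjC_nat sgC. Qed.

End Gen.

Section Gen2.
Variable C : numClosedFieldType.

Definition sgn3 (c a1 a2 : A) : C :=
  sg C (c.2 && a1.1) * sg C (a2.2 && (c.1 (+) a1.1 (+) a2.1)).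

Lemma pair_tr c a1 a2 u1 u2 :
  sg C (a1.2 && u1) * sg C (a2.2 && u2) * psi C c (u1 (+) a1.1, u2 (+) a2.1)
  = sgn3 c a1 a2 * psi C (addA (addA c a1) a2) (u1, u2).
Proof.
rewrite !psiE /sgn3 /addA /sg.
by case: c => [[] []]; case: a1 => [[] []]; case: a2 => [[] []]; case: u1; case: u2;
  rewrite /=; ring.
Qed.

Lemma psi_flip c u1 u2 : psi C c (~~ u1, ~~ u2) = sg C c.2 * psi C c (u1, u2).
Proof.
rewrite !psiE /sg.
by case: c => [[] []]; case: u1; case: u2; rewrite /=; ring.
Qed.

Lemma psi_par c u1 u2 : sg C u1 * sg C u2 * psi C c (u1, u2) = sg C c.1 * psi C c (u1, u2).
Proof.
rewrite !psiE /sg.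
by case: c => [[] []]; case: u1; case: u2; rewrite /=; ring.
Qed.

Definition hpsi (a : A) (u : bool * bool) : C := (u.1 == u.2 (+) a.1)%:R * sg C (a.2 && u.1).

Lemma two_neq0 : (2%:R : C) != 0.
Proof. by rewrite pnatr_eq0. Qed.

Lemma psi_compl u v : \sum_a (psi C a u)^* * psi C a v = (u == v)%:R.
Proof.
have -> : \sum_a (psi C a u)^* * psi C a v = kap C * kap C * \sum_a hpsi a u * hpsi a v.
  rewrite mulr_sumr; apply: eq_bigr => a _.
  by rewrite psiC !psiE /hpsi; ring.
rewrite kapK sum_pair /hpsi /sg.
have h2 := two_neq0.
by case: u => [[] []]; case: v => [[] []]; rewrite /=; field.
Qed.

End Gen2.

Section Gen3.
Variable C : numClosedFieldType.
Local Notation op2 := (op C (bool * bool)%type).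

Definition sandw (T : finType) (rho : op C T) (v : T -> C) : C :=
  \sum_x \sum_y (v x)^* * rho x y * v y.

Definition pw (rho : op2) (a : A) : C := sandw rho (psi C a).

Definition tau (rho : op2) : C := \sum_ab rho ab ab.
Definition xi (rho : op2) : C := \sum_ab rho (~~ ab.1, ~~ ab.2) ab.
Definition zeta (rho : op2) : C := \sum_ab sg C ab.1 * sg C ab.2 * rho ab ab.
Definition eta (rho : op2) : C := \sum_ab sg C ab.1 * sg C ab.2 * rho (~~ ab.1, ~~ ab.2) ab.


Lemma pwE rho a : pw rho a =
  kap C * kap C * \sum_x \sum_y hpsi C a x * rho x y * hpsi C a y.
Proof.
rewrite /pw /sandw mulr_sumr; apply: eq_bigr => x _.
rewrite mulr_sumr; apply: eq_bigr => y _.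
by rewrite psiC !psiE /hpsi; ring.
Qed.

Ltac expand_pw := rewrite /tau /xi /zeta /eta !pwE !kapK !sum_pair /hpsi /sg /=;
  rewrite ?sum_pair /=.

Lemma tauE rho : tau rho = pw rho ff + pw rho ft + pw rho tf + pw rho tt.
Proof. have h2 := two_neq0 C. by expand_pw; field. Qed.
Lemma xiE rho : xi rho = pw rho ff - pw rho ft + pw rho tf - pw rho tt.
Proof. have h2 := two_neq0 C. by expand_pw; field. Qed.
Lemma zetaE rho : zeta rho = pw rho ff + pw rho ft - pw rho tf - pw rho tt.
Proof. have h2 := two_neq0 C. by expand_pw; field. Qed.
Lemma etaE rho : eta rho = pw rho ff - pw rho ft - pw rho tf + pw rho tt.
Proof. have h2 := two_neq0 C. by expand_pw; field. Qed.

Lemma fid_pw rho : fid rho = pw rho ff.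
Proof.
rewrite /fid /pw /sandw; apply: eq_bigr => x _; apply: eq_bigr => y _.
by rewrite !psi_ff.
Qed.

Lemma pw_lin (alpha beta : C) (M N : op2) a :
  pw (fun x y => alpha * M x y + beta * N x y) a = alpha * pw M a + beta * pw N a.
Proof.
rewrite /pw /sandw !mulr_sumr -big_split /=; apply: eq_bigr => x _.
rewrite !mulr_sumr -big_split /=; apply: eq_bigr => y _; ring.
Qed.

Lemma pw_proj00 a : pw (proj (psi00 C)) a = (a == ff)%:R.
Proof.
have h2 := two_neq0 C.
have -> : pw (proj (psi00 C)) a = (kap C * kap C) * (kap C * kap C) *
   \sum_x \sum_y hpsi C a x * ((x.1 == x.2)%:R * (y.1 == y.2)%:R) * hpsi C a y.
  rewrite /pw /sandw mulr_sumr; apply: eq_bigr => x _; rewrite mulr_sumr; apply: eq_bigr => y _.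
  by rewrite /proj psiC !psi00C !psiE !psi00E /hpsi; ring.
rewrite kapK !sum_pair /hpsi /sg /=.
by case: a => [[] []]; rewrite /=; field.
Qed.

Lemma pw_id a : pw (@idop C (bool * bool)%type) a = 1.
Proof.
have h2 := two_neq0 C.
rewrite pwE kapK !sum_pair /hpsi /idop /sg /=.
by case: a => [[] []]; rewrite /=; field.
Qed.

Lemma pw_werner rho a :
  pw (werner rho) a = if a == ff then fid rho else (1 - fid rho) / 3%:R.
Proof.
have h3 : (3%:R : C) != 0 by rewrite pnatr_eq0.
have -> : pw (werner rho) a =
   (4%:R * fid rho - 1) / 3%:R * pw (proj (psi00 C)) a + (1 - fid rho) / 3%:R * pw (@idop C _) a.
  by rewrite -pw_lin.
rewrite pw_proj00 pw_id.
by case: a => [[] []]; rewrite /=; field.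
Qed.


End Gen3.

Section Gen4.
Variable C : numClosedFieldType.
Variable n : nat.

Lemma prod_qubits (f : qubit n -> C) :
  \prod_q f q = f (q0 n) * f (qN n) * \prod_(j < n.+1) (f (k1 j) * f (k2 j)).
Proof.
have -> : \prod_q f q = \prod_i \prod_b f (i, b).
  by rewrite pair_bigA; apply: eq_bigr => -[].
under eq_bigr do rewrite big_bool /=.
rewrite big_split /= [X in X * _]big_ord_recr [X in _ * X]big_ord_recl /= big_split /=.
rewrite /q0 /qN /k1 /k2; ring.
Qed.

Lemma andR (b1 b2 : bool) : ((b1 && b2)%:R : C) = b1%:R * b2%:R.
Proof. by case: b1; case: b2; rewrite /= ?mulr1 ?mulr0 ?mul0r. Qed.

Lemma eq_ffunR (x y : basis n) : ((x == y)%:R : C) = \prod_q (x q == y q)%:R.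
Proof.
case: (eqVneq x y) => [-> | ne].
  by rewrite big1 // => q _; rewrite eqxx.
have [q nq] : exists q, x q != y q.
  case: (pickP (fun q => x q != y q)) => [q nq | H]; first by exists q.
  exfalso; move/eqP: ne; apply; apply/ffunP => q.
  by move: (H q) => /= /negbFE /eqP.
by rewrite (bigD1 q) //= (negbTE nq) mul0r.
Qed.

Definition Bv (c : A) (t : syndrome n) (x : basis n) : C :=
  psi C c (x (q0 n), x (qN n)) * \prod_j psi C (t j) (x (k1 j), x (k2 j)).

Definition flip (x : basis n) : basis n := [ffun q => ~~ x q].
Definition par (x : basis n) : C := \prod_q sg C (x q).
Definition LX (t : syndrome n) : C := \prod_j sg C (t j).2.
Definition LZ (t : syndrome n) : C := \prod_j sg C (t j).1.

Lemma Bv_flip c t x : Bv c t (flip x) = sg C c.2 * LX t * Bv c t x.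
Proof.
rewrite /Bv /flip /LX !ffunE psi_flip.
under eq_bigr do rewrite !ffunE psi_flip.
rewrite big_split /=; ring.
Qed.

Lemma Bv_par c t x : par x * Bv c t x = sg C c.1 * LZ t * Bv c t x.
Proof.
rewrite /par prod_qubits /Bv /LZ.
transitivity ((sg C (x (q0 n)) * sg C (x (qN n)) * psi C c (x (q0 n), x (qN n))) *
  \prod_j (sg C (x (k1 j)) * sg C (x (k2 j)) * psi C (t j) (x (k1 j), x (k2 j)))).
  rewrite [in RHS]big_split /=; ring.
rewrite psi_par; under eq_bigr do rewrite psi_par.
rewrite big_split /=; ring.
Qed.

Lemma Bv_compl x y : \sum_c \sum_t (Bv c t x)^* * Bv c t y = (x == y)%:R.
Proof.
transitivity ((\sum_c (psi C c (x (q0 n), x (qN n)))^* * psi C c (y (q0 n), y (qN n))) *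
  \prod_(j < n.+1) \sum_a (psi C a (x (k1 j), x (k2 j)))^* * psi C a (y (k1 j), y (k2 j))).
  rewrite bigA_distr_bigA big_distrl /=; apply: eq_bigr => c _.
  rewrite mulr_sumr; apply: eq_bigr => t _.
  rewrite /Bv rmorphM rmorph_prod /= big_split /=; ring.
rewrite psi_compl; under eq_bigr do rewrite psi_compl.
rewrite eq_ffunR prod_qubits xpair_eqE andR.
by under eq_bigr do rewrite xpair_eqE andR.
Qed.

End Gen4.

Section Gen5.
Variable C : numClosedFieldType.
Variable n : nat.

Definition wgt (c : A) (t : syndrome n) : C :=
  (1 + sg C c.2 * LX C t) * (1 + sg C c.1 * LZ C t) / 4%:R.

Definition G (rho : op C (basis n)) : C :=
  \sum_t \sum_c wgt c t * sandw rho (Bv C c t).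

Lemma w_Bv c t (y : basis n) :
  (1 + sg C c.2 * LX C t) * (1 + sg C c.1 * LZ C t) * Bv C c t y =
  Bv C c t y + Bv C c t (flip y) + par C y * Bv C c t y + par C y * Bv C c t (flip y).
Proof.
rewrite Bv_par Bv_flip (mulrCA (par C y)) Bv_par; ring.
Qed.

Lemma sum_ind (T : finType) (F : T -> C) z : \sum_x F x * (x == z)%:R = F z.
Proof.
rewrite (bigD1 z) //= eqxx mulr1 big1 ?addr0 // => x /negbTE ->; by rewrite mulr0.
Qed.

Lemma swap4 (T1 T2 T3 T4 : finType) (F : T1 -> T2 -> T3 -> T4 -> C) :
  \sum_a \sum_b \sum_c \sum_d F a b c d = \sum_c \sum_d \sum_a \sum_b F a b c d.
Proof.
transitivity (\sum_a \sum_c \sum_d \sum_b F a b c d).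
  apply: eq_bigr => a _; rewrite exchange_big; apply: eq_bigr => c _; exact: exchange_big.
rewrite exchange_big; apply: eq_bigr => c _; exact: exchange_big.
Qed.

Lemma G_formula rho : G rho =
  (\sum_y (rho y y + rho (flip y) y + par C y * rho y y + par C y * rho (flip y) y)) / 4%:R.
Proof.
pose H c t (x y : basis n) := (Bv C c t x)^* * Bv C c t y + (Bv C c t x)^* * Bv C c t (flip y)
   + par C y * ((Bv C c t x)^* * Bv C c t y) + par C y * ((Bv C c t x)^* * Bv C c t (flip y)).
have E1 : forall c t, wgt c t * sandw rho (Bv C c t) =
    \sum_x \sum_y rho x y / 4%:R * H c t x y.
  move=> c t; rewrite /sandw mulr_sumr; apply: eq_bigr => x _.
  rewrite mulr_sumr; apply: eq_bigr => y _.
  transitivity ((Bv C c t x)^* * rho x y *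
     ((1 + sg C c.2 * LX C t) * (1 + sg C c.1 * LZ C t) * Bv C c t y) / 4%:R).
    rewrite /wgt; ring.
  rewrite w_Bv /H; ring.
have E2 : forall x y : basis n, \sum_c \sum_t H c t x y =
    (x == y)%:R + (x == flip y)%:R + par C y * (x == y)%:R + par C y * (x == flip y)%:R.
  move=> x y; rewrite -!Bv_compl !mulr_sumr -!big_split /=; apply: eq_bigr => c _.
  by rewrite !mulr_sumr -!big_split /=.
have E3 : forall x y : basis n, \sum_c \sum_t rho x y / 4%:R * H c t x y =
    rho x y / 4%:R * ((x == y)%:R + (x == flip y)%:R + par C y * (x == y)%:R
                      + par C y * (x == flip y)%:R).
  move=> x y; rewrite -E2 mulr_sumr; apply: eq_bigr => c _; by rewrite mulr_sumr.
rewrite /G exchange_big /=.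
under eq_bigr do under eq_bigr do rewrite E1.
rewrite swap4.
transitivity (\sum_x \sum_y rho x y / 4%:R * ((x == y)%:R + (x == flip y)%:R
    + par C y * (x == y)%:R + par C y * (x == flip y)%:R)).
  by apply: eq_bigr => x _; apply: eq_bigr => y _; exact: E3.
rewrite exchange_big /= mulr_suml; apply: eq_bigr => y _.
transitivity (\sum_x ((rho x y / 4%:R) * (x == y)%:R + (rho x y / 4%:R) * (x == flip y)%:R
   + (rho x y / 4%:R * par C y) * (x == y)%:R + (rho x y / 4%:R * par C y) * (x == flip y)%:R)).
  by apply: eq_bigr => x _; ring.
rewrite !big_split /= !sum_ind; ring.
Qed.


Lemma sum_fact (f : 'I_n.+2 -> bool * bool -> C) :
  \sum_(y : basis n) \prod_k f k (y (k, false), y (k, true)) = \prod_k \sum_ab f k ab.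
Proof.
rewrite bigA_distr_bigA /=.
pose h (y : basis n) : {ffun 'I_n.+2 -> bool * bool} := [ffun k => (y (k, false), y (k, true))].
pose h' (g : {ffun 'I_n.+2 -> bool * bool}) : basis n :=
  [ffun q : qubit n => if q.2 then (g q.1).2 else (g q.1).1].
have hK : cancel h h' by move=> y; apply/ffunP => -[i []]; rewrite !ffunE.
have h'K : cancel h' h by move=> g; apply/ffunP => k; rewrite !ffunE /=; case: (g k).
rewrite (reindex h) /=; last by exists h' => ? _.
by apply: eq_bigr => y _; apply: eq_bigr => k _; rewrite ffunE.
Qed.

Lemma parE (y : basis n) : par C y = \prod_k (sg C (y (k, false)) * sg C (y (k, true))).
Proof.
rewrite /par.
have -> : \prod_q sg C (y q) = \prod_i \prod_b sg C (y (i, b)).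
  by rewrite pair_bigA; apply: eq_bigr => -[].
by apply: eq_bigr => i _; rewrite big_bool mulrC.
Qed.

Lemma G_chain (rhos : 'I_n.+2 -> op C (bool * bool)%type) :
  G (chain_state rhos) = (\prod_k tau (rhos k) + \prod_k xi (rhos k)
     + \prod_k zeta (rhos k) + \prod_k eta (rhos k)) / 4%:R.
Proof.
rewrite G_formula !big_split /=; congr (_ / _); congr (_ + _ + _ + _).
- rewrite /chain_state /tau -sum_fact; apply: eq_bigr => y _.
  by apply: eq_bigr => k _.
- rewrite /chain_state /xi -sum_fact; apply: eq_bigr => y _.
  by apply: eq_bigr => k _; rewrite /flip !ffunE.
- rewrite /chain_state /zeta -sum_fact; apply: eq_bigr => y _.
  by rewrite parE -big_split; apply: eq_bigr => k _.
- rewrite /chain_state /eta -sum_fact; apply: eq_bigr => y _.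
  by rewrite parE -big_split; apply: eq_bigr => k _; rewrite /flip !ffunE.
Qed.

End Gen5.

Section Gen6.
Variable C : numClosedFieldType.
Variable n : nat.
Implicit Types (rho M : op C (basis n)) (P : protocol n) (s : syndrome n).

Lemma fid_Lambda P rho : fid (Lambda P rho) = \sum_s fid (Lambda_s P s rho).
Proof.
rewrite /fid /Lambda.
transitivity (\sum_x \sum_y \sum_s (psi00 C x)^* * Lambda_s P s rho x y * psi00 C y).
  by apply: eq_bigr => x _; apply: eq_bigr => y _; rewrite mulr_sumr mulr_suml.
under eq_bigr do rewrite exchange_big.
by rewrite exchange_big.
Qed.

Definition Phi s (y : basis n) : C := Bv C (false, false) s y.

Definition mix (z y : basis n) : basis n := [ffun q => if is_end q then z q else y q].

Lemma is_end_k1 (j : 'I_n.+1) : is_end (k1 j) = false.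
Proof.
rewrite /is_end /k1 /q0 /qN !xpair_eqE /= andbF andbT /=.
apply/negP => /eqP /(congr1 val) /= jn.
by move: (ltn_ord j); rewrite jn ltnn.
Qed.

Lemma is_end_k2 (j : 'I_n.+1) : is_end (k2 j) = false.
Proof.
rewrite /is_end /k2 /q0 /qN !xpair_eqE /= ?andbF ?andbT ?orbF.
by [].
Qed.

Lemma is_end_q0 : is_end (q0 n). Proof. by rewrite /is_end eqxx. Qed.
Lemma is_end_qN : is_end (qN n). Proof. by rewrite /is_end eqxx orbT. Qed.

Lemma prod_indR (T : finType) (Pr : pred T) (b : T -> bool) :
  \prod_(q | Pr q) ((b q)%:R : C) = [forall q, Pr q ==> b q]%:R.
Proof.
case: (boolP [forall q, Pr q ==> b q]) => [/forallP H | /forallPn [q]].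
  by rewrite big1 // => q Pq; move: (H q); rewrite Pq /= => ->.
rewrite negb_imply => /andP [Pq nb].
by rewrite (bigD1 q) //= (negbTE nb) mul0r.
Qed.

Lemma mix_eq (x y z : basis n) :
  [forall q, is_end q ==> (x q == z q)] && [forall q, ~~ is_end q ==> (x q == y q)]
  = (x == mix z y).
Proof.
apply/idP/idP.
  case/andP => /forallP H1 /forallP H2; apply/eqP/ffunP => q; rewrite ffunE.
  case: (boolP (is_end q)) => e.
    by move: (H1 q); rewrite e => /eqP.
  by move: (H2 q); rewrite e => /eqP.
move/eqP ->; apply/andP; split; apply/forallP => q; rewrite /mix ffunE;
  by case E: (is_end q); rewrite /= ?eqxx.
Qed.

Lemma swap3 (T1 T2 T3 : finType) (F : T1 -> T2 -> T3 -> C) :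
  \sum_a \sum_b \sum_c F a b c = \sum_c \sum_b \sum_a F a b c.
Proof.
under eq_bigr do rewrite exchange_big.
rewrite exchange_big; apply: eq_bigr => c _; exact: exchange_big.
Qed.

Lemma cond_split (x y : basis n) (ab ab' : bool * bool) (R : bool) :
  ([&& x (q0 n) == ab.1, x (qN n) == ab.2, y (q0 n) == ab'.1, y (qN n) == ab'.2 & R]%:R : C)
  = (ab == (x (q0 n), x (qN n)))%:R * (ab' == (y (q0 n), y (qN n)))%:R * R%:R.
Proof.
case: ab => a b; case: ab' => a' b'.
rewrite !andR ?xpair_eqE ?andR /= (eq_sym a) (eq_sym b) (eq_sym a') (eq_sym b'); ring.
Qed.

Definition Rne (x y : basis n) := [forall q, ~~ is_end q ==> (x q == y q)].

Lemma fid_ptrace1 (N : op C (basis n)) : fid (ptrace_rep N) =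
  \sum_(x : basis n) \sum_(y : basis n) (psi00 C (x (q0 n), x (qN n)))^* * (Rne x y)%:R * N x y * psi00 C (y (q0 n), y (qN n)).
Proof.
rewrite /fid /ptrace_rep.
transitivity (\sum_ab \sum_ab' \sum_(x : basis n) \sum_(y : basis n) (psi00 C ab)^* *
  ([&& x (q0 n) == ab.1, x (qN n) == ab.2, y (q0 n) == ab'.1, y (qN n) == ab'.2
       & [forall q, ~~ is_end q ==> (x q == y q)]]%:R * N x y) * psi00 C ab').
  apply: eq_bigr => ab _; apply: eq_bigr => ab' _.
  rewrite mulr_sumr mulr_suml; apply: eq_bigr => x _.
  by rewrite mulr_sumr mulr_suml.
rewrite swap4; apply: eq_bigr => x _; apply: eq_bigr => y _.
under eq_bigr do under eq_bigr do rewrite cond_split.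
transitivity (\sum_ab \sum_ab' ((psi00 C ab)^* * (Rne x y)%:R * N x y * psi00 C ab')
   * (ab' == (y (q0 n), y (qN n)))%:R * (ab == (x (q0 n), x (qN n)))%:R).
  by apply: eq_bigr => ab _; apply: eq_bigr => ab' _; rewrite /Rne; ring.
under eq_bigr do rewrite -big_distrl /= sum_ind.
by rewrite sum_ind.
Qed.

Lemma conjM' (a b : C) : (a * b)^* = a^* * b^*.
Proof. exact: rmorphM. Qed.
Lemma conj_prod (I : finType) (F : I -> C) : (\prod_i F i)^* = \prod_i (F i)^*.
Proof. exact: rmorph_prod. Qed.

Lemma Pimat_pt s (x y z : basis n) :
  (psi00 C (x (q0 n), x (qN n)))^* * (Rne x y)%:R * Pimat C s x z * psi00 C (y (q0 n), y (qN n))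
  = (x == mix z y)%:R * ((Phi s z)^* * Phi s y).
Proof.
rewrite /Pimat prod_indR.
transitivity (([forall q, is_end q ==> (x q == z q)] && Rne x y)%:R *
  ((psi00 C (x (q0 n), x (qN n)))^* *
   (\prod_j proj (psi C (s j)) (x (k1 j), x (k2 j)) (z (k1 j), z (k2 j)))
   * psi00 C (y (q0 n), y (qN n)))).
  rewrite andR; ring.
rewrite mix_eq; case: (eqVneq x (mix z y)) => [-> | _]; last by rewrite !mul0r.
rewrite mul1r /mix !ffunE is_end_q0 is_end_qN.
under eq_bigr do rewrite /proj !ffunE is_end_k1 is_end_k2.
rewrite /Phi /Bv !psi_ff /= mul1r (conjM' (psi00 C _)) conj_prod big_split /=; ring.
Qed.

Lemma fid_ptrace s (M : op C (basis n)) :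
  fid (ptrace_rep (mulop (Pimat C s) M)) = sandw M (Phi s).
Proof.
rewrite fid_ptrace1 /sandw /mulop.
transitivity (\sum_(x : basis n) \sum_(y : basis n) \sum_(z : basis n)
  (psi00 C (x (q0 n), x (qN n)))^* * (Rne x y)%:R * Pimat C s x z * psi00 C (y (q0 n), y (qN n))
  * M z y).
  apply: eq_bigr => x _; apply: eq_bigr => y _.
  rewrite mulr_sumr mulr_suml; apply: eq_bigr => z _; ring.
rewrite swap3; apply: eq_bigr => z _; apply: eq_bigr => y _.
under eq_bigr do rewrite Pimat_pt.
transitivity (\sum_(x : basis n) ((Phi s z)^* * M z y * Phi s y) * (x == mix z y)%:R).
  by apply: eq_bigr => x _; ring.
by rewrite sum_ind.
Qed.

Lemma sandw_conj (T : finType) (Cm rho : op C T) (v : T -> C) :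
  sandw (mulop (mulop Cm rho) (adjop Cm)) v = sandw rho (fun u => \sum_y (Cm y u)^* * v y).
Proof.
transitivity (\sum_z \sum_y \sum_u \sum_w (v z)^* * Cm z u * rho u w * (Cm y w)^* * v y).
  rewrite /sandw /mulop /adjop; apply: eq_bigr => z _; apply: eq_bigr => y _.
  rewrite mulr_sumr mulr_suml.
  under eq_bigr do rewrite mulr_suml mulr_sumr mulr_suml.
  rewrite exchange_big /=; apply: eq_bigr => u _; apply: eq_bigr => w _; ring.
rewrite /sandw -swap4; apply: eq_bigr => u _; apply: eq_bigr => w _.
rewrite rmorph_sum /= mulr_suml mulr_suml; apply: eq_bigr => z _.
rewrite mulr_sumr; apply: eq_bigr => y _.
rewrite conjM' conjCK; ring.
Qed.

End Gen6.

Section Gen7.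
Variable C : numClosedFieldType.
Variable n : nat.
Implicit Types (rho : op C (basis n)) (P : protocol n) (s : syndrome n).

Definition shiftv P s (u : basis n) : basis n := [ffun q => u q (+) (corr_pauli P s q).1].

Lemma Cm_collapse P s (y u : basis n) : (Cmat C P s y u)^* =
  (y == shiftv P s u)%:R * \prod_q sg C ((corr_pauli P s q).2 && u q).
Proof.
rewrite /Cmat conj_prod; under eq_bigr do rewrite pauliC pauliE.
rewrite big_split /= eq_ffunR; congr (_ * _); apply: eq_bigr => q _.
rewrite /shiftv ffunE.
by case: (y q); case: (u q); case: (corr_pauli P s q).1.
Qed.

Definition eP P s : A := addA (addA (false, false) (corr_pauli P s (q0 n))) (corr_pauli P s (qN n)).
Definition phiP P s : syndrome n :=
  [ffun j => addA (addA (s j) (corr_pauli P s (k1 j))) (corr_pauli P s (k2 j))].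
Definition sgnP P s : C := sgn3 C (false, false) (corr_pauli P s (q0 n)) (corr_pauli P s (qN n)) *
  \prod_j sgn3 C (s j) (corr_pauli P s (k1 j)) (corr_pauli P s (k2 j)).

Lemma chiE P s (u : basis n) :
  \sum_y (Cmat C P s y u)^* * Phi C s y = sgnP P s * Bv C (eP P s) (phiP P s) u.
Proof.
under eq_bigr do rewrite Cm_collapse.
transitivity (\sum_y ((\prod_q sg C ((corr_pauli P s q).2 && u q)) * Phi C s y) * (y == shiftv P s u)%:R).
  by apply: eq_bigr => y _; ring.
rewrite sum_ind prod_qubits /Phi /Bv /shiftv !ffunE.
have -> : \prod_j psi C (s j) ([ffun q => u q (+) (corr_pauli P s q).1] (k1 j),
                              [ffun q => u q (+) (corr_pauli P s q).1] (k2 j)) =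
  \prod_j psi C (s j) (u (k1 j) (+) (corr_pauli P s (k1 j)).1, u (k2 j) (+) (corr_pauli P s (k2 j)).1).
  by apply: eq_bigr => j _; rewrite !ffunE.
transitivity ((sg C ((corr_pauli P s (q0 n)).2 && u (q0 n)) * sg C ((corr_pauli P s (qN n)).2 && u (qN n)) *
   psi C (false, false) (u (q0 n) (+) (corr_pauli P s (q0 n)).1, u (qN n) (+) (corr_pauli P s (qN n)).1)) *
  \prod_j (sg C ((corr_pauli P s (k1 j)).2 && u (k1 j)) * sg C ((corr_pauli P s (k2 j)).2 && u (k2 j)) *
   psi C (s j) (u (k1 j) (+) (corr_pauli P s (k1 j)).1, u (k2 j) (+) (corr_pauli P s (k2 j)).1))).
  by rewrite [in RHS]big_split /= -!mulrA; congr (_ * (_ * _)); exact: mulrCA.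
rewrite pair_tr; under eq_bigr do rewrite pair_tr.
rewrite /sgnP /eP /phiP.
have -> : \prod_j psi C ([ffun j0 => addA (addA (s j0) (corr_pauli P s (k1 j0))) (corr_pauli P s (k2 j0))] j)
   (u (k1 j), u (k2 j)) = \prod_j psi C (addA (addA (s j) (corr_pauli P s (k1 j))) (corr_pauli P s (k2 j)))
   (u (k1 j), u (k2 j)).
  by apply: eq_bigr => j _; rewrite ffunE.
rewrite big_split /=; ring.
Qed.

Lemma sandw_ext (T : finType) (rho : op C T) (v v' : T -> C) :
  (forall u, v u = v' u) -> sandw rho v = sandw rho v'.
Proof.
move=> E; rewrite /sandw; apply: eq_bigr => x _; apply: eq_bigr => y _; by rewrite !E.
Qed.

Lemma sandw_scale (T : finType) (rho : op C T) (sigma : C) (v : T -> C) :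
  sandw rho (fun u => sigma * v u) = sigma^* * sigma * sandw rho v.
Proof.
rewrite /sandw mulr_sumr; apply: eq_bigr => x _; rewrite mulr_sumr; apply: eq_bigr => y _.
rewrite conjM'; ring.
Qed.

Lemma sgn3_sq c a1 a2 : (sgn3 C c a1 a2)^* * sgn3 C c a1 a2 = 1.
Proof.
rewrite /sgn3 conjM' !sgC.
set x := sg C _; set y := sg C _.
transitivity ((sg C (c.2 && a1.1) * sg C (c.2 && a1.1)) *
  (sg C (a2.2 && (c.1 (+) a1.1 (+) a2.1)) * sg C (a2.2 && (c.1 (+) a1.1 (+) a2.1)))).
  rewrite /x /y; ring.
by rewrite !sgK mulr1.
Qed.

Lemma sgnP_sq P s : (sgnP P s)^* * sgnP P s = 1.
Proof.
rewrite /sgnP conjM' conj_prod mulrACA sgn3_sq mul1r -big_split /=.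
by rewrite big1 // => j _; rewrite sgn3_sq.
Qed.

Lemma fid_Lambda_s P s rho :
  fid (Lambda_s P s rho) = sandw rho (Bv C (eP P s) (phiP P s)).
Proof.
rewrite /Lambda_s fid_ptrace sandw_conj.
rewrite (sandw_ext _ (v' := fun u => sgnP P s * Bv C (eP P s) (phiP P s) u)); last by move=> u; rewrite chiE.
by rewrite sandw_scale sgnP_sq mul1r.
Qed.

End Gen7.

Section Gen8.
Variable C : numClosedFieldType.
Variable n : nat.
Implicit Types (rho : op C (basis n)) (P : protocol n) (s : syndrome n).

Definition Wv (x : basis n) : C := \prod_k psi00 C (x (k, false), x (k, true)).
Definition perfect : op C (basis n) := chain_state (fun _ => proj (psi00 C)).
Definition ip (v : basis n -> C) : C := \sum_y (Wv y)^* * v y.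

Lemma perfectE (x y : basis n) : perfect x y = Wv x * (Wv y)^*.
Proof. by rewrite /perfect /chain_state /proj big_split /= conj_prod. Qed.

Lemma sandw_perfect v : sandw perfect v = (ip v)^* * ip v.
Proof.
rewrite /sandw /ip rmorph_sum /= mulr_suml; apply: eq_bigr => x _.
rewrite mulr_sumr; apply: eq_bigr => y _.
by rewrite perfectE conjM' conjCK; ring.
Qed.

Lemma flip_inj : injective (@flip n).
Proof. by move=> x y E; apply/ffunP => q; move/ffunP: E => /(_ q); rewrite !ffunE => /negb_inj. Qed.

Lemma Wv_flip (x : basis n) : Wv (flip x) = Wv x.
Proof.
rewrite /Wv; apply: eq_bigr => k _; rewrite /flip !ffunE -!psi_ff psi_flip /sg /=.
by rewrite expr0 mul1r.
Qed.

Lemma par_conj (x : basis n) : (par C x)^* = par C x.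
Proof. by rewrite /par conj_prod; apply: eq_bigr => q _; rewrite sgC. Qed.

Lemma par_Wv (x : basis n) : par C x * Wv x = Wv x.
Proof.
rewrite parE /Wv -big_split /=; apply: eq_bigr => k _.
by rewrite -!psi_ff psi_par /sg /= expr0 mul1r.
Qed.

Lemma ip_wgt c (t : syndrome n) : wgt C c t * ip (Bv C c t) = ip (Bv C c t).
Proof.
set i := ip _.
have hX : sg C c.2 * LX C t * i = i.
  rewrite /i /ip mulr_sumr [in RHS](reindex_inj flip_inj) /=; apply: eq_bigr => y _.
  by rewrite Wv_flip Bv_flip; ring.
have hZ : sg C c.1 * LZ C t * i = i.
  rewrite /i /ip mulr_sumr; apply: eq_bigr => y _.
  rewrite -[in RHS](par_Wv y) conjM' par_conj.
  transitivity ((Wv y)^* * (par C y * Bv C c t y)); last by ring.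
  by rewrite Bv_par; ring.
have h4 : (4%:R : C) != 0 by rewrite pnatr_eq0.
rewrite /wgt.
transitivity ((i + sg C c.2 * LX C t * i + sg C c.1 * LZ C t * i +
   sg C c.2 * LX C t * (sg C c.1 * LZ C t * i)) / 4%:R).
  ring.
by rewrite hZ !hX; field.
Qed.

Lemma fid_scale (k : C) (M : op C (bool * bool)%type) :
  fid (fun x y => k * M x y) = k * fid M.
Proof.
rewrite /fid mulr_sumr; apply: eq_bigr => x _; rewrite mulr_sumr; apply: eq_bigr => y _; ring.
Qed.

Lemma B_wgt P s :
  (let out := Lambda_s P s (chain_state (fun _ => proj (psi00 C))) in
   (fun ab ab' => (trop out)^-1 * out ab ab') = proj (psi00 C)) ->
  wgt C (eP P s) (phiP P s) != 0.
Proof.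
move=> /= H.
have F1 : fid (Lambda_s P s (chain_state (fun _ => proj (psi00 C)))) != 0.
  apply/eqP => F0; move: (congr1 (@fid C) H).
  by rewrite fid_scale F0 mulr0 fid_pw pw_proj00 /= => /eqP; rewrite eq_sym oner_eq0.
apply/eqP => W0; move: F1.
rewrite fid_Lambda_s -/perfect sandw_perfect -ip_wgt W0 mul0r mulr0.
by rewrite eqxx.
Qed.

Lemma LXK (t : syndrome n) : LX C t * LX C t = 1.
Proof. by rewrite /LX -big_split /= big1 // => j _; exact: sgK. Qed.
Lemma LZK (t : syndrome n) : LZ C t * LZ C t = 1.
Proof. by rewrite /LZ -big_split /= big1 // => j _; exact: sgK. Qed.

Lemma sign_one (a b : C) : a * a = 1 -> (1 + a) * b != 0 -> a = 1.
Proof.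
move=> aa nz.
have e : (1 + a) * (1 - a) = 1 - a * a by ring.
rewrite aa subrr in e; move/eqP: e; rewrite mulf_eq0 => /orP [h|h].
  by move: nz; rewrite (eqP h) mul0r eqxx.
by apply/eqP; rewrite eq_sym -subr_eq0.
Qed.

Lemma wgt_ind c (t : syndrome n) : wgt C c t != 0 -> forall c', wgt C c' t = (c' == c)%:R.
Proof.
move=> nz c'.
have h4 : (4%:R : C) != 0 by rewrite pnatr_eq0.
have ha : sg C c.2 * LX C t = 1.
  apply: (@sign_one _ ((1 + sg C c.1 * LZ C t) / 4%:R)).
    transitivity ((sg C c.2 * sg C c.2) * (LX C t * LX C t)); first by ring.
    by rewrite sgK LXK mulr1.
  by move: nz; rewrite /wgt mulrA.
have hb : sg C c.1 * LZ C t = 1.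
  apply: (@sign_one _ ((1 + sg C c.2 * LX C t) / 4%:R)).
    transitivity ((sg C c.1 * sg C c.1) * (LZ C t * LZ C t)); first by ring.
    by rewrite sgK LZK mulr1.
  by move: nz; rewrite /wgt (mulrC (1 + sg C c.2 * _)) mulrA.
have eX : LX C t = sg C c.2 by rewrite -[LX C t]mul1r -(sgK C c.2) -mulrA ha mulr1.
have eZ : LZ C t = sg C c.1 by rewrite -[LZ C t]mul1r -(sgK C c.1) -mulrA hb mulr1.
rewrite /wgt eX eZ /sg.
by case: c {nz ha hb eX eZ} => [[] []]; case: c' => [[] []]; rewrite /=; field.
Qed.

Lemma cp_k1 P s (j : 'I_n.+1) : corr_pauli P s (k1 j) = P s (repnode j).
Proof. by []. Qed.

Lemma cp_k2 P s (j : 'I_n.+1) : corr_pauli P s (k2 j) = (false, false).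
Proof. by rewrite /corr_pauli /k2 /=. Qed.

Lemma addAK (x p : A) : addA (addA x p) p = x.
Proof. by case: x => x1 x2; case: p => p1 p2; rewrite /addA /= -!addbA !addbb !addbF. Qed.

Lemma phiP_inj P :
  (exists alpha : {perm 'I_n.+1},
     forall (k : 'I_n.+1) (s s' : syndrome n),
       (forall j : 'I_n.+1, (j < k)%N -> s (alpha j) = s' (alpha j)) ->
       P s (repnode (alpha k)) = P s' (repnode (alpha k))) ->
  injective (phiP P).
Proof.
move=> [alpha HA] s s' E.
have key : forall k : nat, forall j : 'I_n.+1, (j < k)%N -> s (alpha j) = s' (alpha j).
  elim=> [|k IH] j //; rewrite ltnS leq_eqVlt => /orP [/eqP jk | jk]; last exact: IH.
  have HP : P s (repnode (alpha j)) = P s' (repnode (alpha j)).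
    by apply: HA => j' hj'; apply: IH; rewrite -jk.
  move: (congr1 (fun f : syndrome n => f (alpha j)) E).
  rewrite /phiP !ffunE !cp_k1 !cp_k2 HP => /(congr1 (fun x => addA x (false, false))).
  rewrite !addAK => /(congr1 (fun x => addA x (P s' (repnode (alpha j))))).
  by rewrite !addAK.
apply/ffunP => j.
by have := key n.+1 (alpha^-1 j)%g (ltn_ord _); rewrite permKV.
Qed.

Lemma fid_Lambda_G P : swap_and_correct C P -> forall rho, fid (Lambda P rho) = G rho.
Proof.
move=> [HA HB] rho.
rewrite fid_Lambda /G [in RHS](reindex_inj (phiP_inj HA)) /=; apply: eq_bigr => s _.
rewrite fid_Lambda_s.
have HW := wgt_ind (B_wgt (HB s)).
transitivity (\sum_c sandw rho (Bv C c (phiP P s)) * (c == eP P s)%:R).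
  by rewrite sum_ind.
by apply: eq_bigr => c _; rewrite HW mulrC.
Qed.

End Gen8.


Section Fld.
Variable F : fieldType.
Definition tauF (v : A -> F) := v ff + v ft + v tf + v tt.
Definition xiF (v : A -> F) := v ff - v ft + v tf - v tt.
Definition zetaF (v : A -> F) := v ff + v ft - v tf - v tt.
Definition etaF (v : A -> F) := v ff - v ft - v tf + v tt.
Definition chF (a : A) (t x z y : F) : F :=
  (t + (-1) ^+ a.2 * x + (-1) ^+ a.1 * z + (-1) ^+ (a.1 (+) a.2) * y) / 4%:R.
Definition rd N (w : 'I_N -> A -> F) (a : A) : F :=
  chF a (\prod_k tauF (w k)) (\prod_k xiF (w k)) (\prod_k zetaF (w k)) (\prod_k etaF (w k)).
End Fld.

Section Real.
Variable R : realFieldType.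
Implicit Types (e : R).

Definition wW N (w : 'I_N -> A -> R) : 'I_N -> A -> R :=
  fun k a => if a == ff then w k ff else (1 - w k ff) / 3%:R.

Definition valid N (w : 'I_N -> A -> R) e :=
  [/\ forall k a, 0 <= w k a, forall k, tauF (w k) = 1 & forall k, 1 - w k ff <= e].

Lemma rd_rec N (w : 'I_N.+1 -> A -> R) a :
  let w0 := fun k => w (widen_ord (leqnSn N) k) in let p := w ord_max in
  rd w a = rd w0 ff * p a + rd w0 ft * p (addA a ft) + rd w0 tf * p (addA a tf)
         + rd w0 tt * p (addA a tt).
Proof.
have h4 : (4%:R : R) != 0 by rewrite pnatr_eq0.
rewrite /rd !big_ord_recr /= /chF /tauF /xiF /zetaF /etaF.
by case: a => [[] []]; rewrite /addA /=; field.
Qed.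

Lemma rd_sum N (w : 'I_N -> A -> R) : (forall k, tauF (w k) = 1) ->
  rd w ff + rd w ft + rd w tf + rd w tt = 1.
Proof.
move=> ht; have h4 : (4%:R : R) != 0 by rewrite pnatr_eq0.
rewrite /rd /chF.
have -> : \prod_k tauF (w k) = 1 by rewrite big1.
by rewrite /=; field.
Qed.

Lemma rd0 (w : 'I_0 -> A -> R) a : rd w a = (a == ff)%:R.
Proof.
have h4 : (4%:R : R) != 0 by rewrite pnatr_eq0.
by rewrite /rd !big_ord0 /chF; case: a => [[] []]; rewrite /=; field.
Qed.

Lemma valid_rec N (w : 'I_N.+1 -> A -> R) e : valid w e ->
  valid (fun k => w (widen_ord (leqnSn N) k)) e.
Proof. by case=> h1 h2 h3; split. Qed.

Lemma chain_inv N (w : 'I_N -> A -> R) e : valid w e ->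
  (forall a, 0 <= rd w a) /\ 1 - rd w ff <= N%:R * e.
Proof.
elim: N w => [|N IH] w hv.
  by split; [move=> a; rewrite rd0 ler0n | rewrite rd0 eqxx subrr mul0r].
have [IH1 IH2] := IH _ (valid_rec hv).
have hs := rd_sum (let: And3 _ h _ := valid_rec hv in h).
case: hv => h1 h2 h3.
split.
  move=> a; rewrite rd_rec /=.
  by rewrite !addr_ge0 // mulr_ge0.
rewrite rd_rec /= /addA /=.
set w0 := fun k => _ in IH1 IH2 hs *.
set p := w ord_max.
have := h1 ord_max; have := h2 ord_max; have := h3 ord_max; rewrite -/p /tauF => e3 e2 e1.
have p0 := e1 ff; have p1 := e1 ft; have p2 := e1 tf; have p3 := e1 tt.
have r0 := IH1 ff; have r1 := IH1 ft; have r2 := IH1 tf; have r3 := IH1 tt.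
have q1 := mulr_ge0 r1 p1; have q2 := mulr_ge0 r2 p2; have q3 := mulr_ge0 r3 p3.
have q0 : 0 <= (1 - rd w0 ff) * (1 - p ff).
  apply: mulr_ge0; lra.
rewrite mulrSr mulrDl mul1r; nra.
Qed.

Lemma wW_valid N (w : 'I_N -> A -> R) e : valid w e -> valid (wW w) e.
Proof.
case=> h1 h2 h3; have h3' : (3%:R : R) != 0 by rewrite pnatr_eq0.
split.
- move=> k a; rewrite /wW; case: (a == ff) => //.
  apply: divr_ge0; last by rewrite ler0n.
  have := h2 k; rewrite /tauF => e2.
  have := h1 k ft; have := h1 k tf; have := h1 k tt; lra.
- by move=> k; rewrite /tauF /wW /=; field.
- by move=> k; rewrite /wW /=.
Qed.

Lemma chain_diff N (w : 'I_N -> A -> R) e : valid w e ->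
  `|rd w ff - rd (wW w) ff| <= 'C(N, 2)%:R * e ^+ 2.
Proof.
elim: N w => [|N IH] w hv.
  by rewrite !rd0 subrr normr0 bin0n mul0r.
have hvW := wW_valid hv.
have [IH1 IH2] := chain_inv (valid_rec hv).
have [IW1 IW2] := chain_inv (valid_rec hvW).
have hs := rd_sum (let: And3 _ h _ := valid_rec hv in h).
have hsW := rd_sum (let: And3 _ h _ := valid_rec hvW in h).
have IHd := IH _ (valid_rec hv).
rewrite (rd_rec w) (rd_rec (wW w)) /= /addA /=.
set w0 := fun k => _ in IH1 IH2 hs IHd *.
set wW0 := fun k => _ in IW1 IW2 hsW *.
have ew : wW0 = wW w0 by [].
rewrite ew in IW1 IW2 hsW *.
set p := w ord_max.
have W0 : wW w ord_max ff = p ff by [].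
have W1 : wW w ord_max ft = (1 - p ff) / 3%:R by [].
have W2 : wW w ord_max tf = (1 - p ff) / 3%:R by [].
have W3 : wW w ord_max tt = (1 - p ff) / 3%:R by [].
rewrite W0 W1 W2 W3.
case: hv => h1 h2 h3.
have := h1 ord_max; have := h2 ord_max; have := h3 ord_max; rewrite -/p /tauF => e3 e2 e1.
have p0 := e1 ff; have p1 := e1 ft; have p2 := e1 tf; have p3 := e1 tt.
have r0 := IH1 ff; have r1 := IH1 ft; have r2 := IH1 tf; have r3 := IH1 tt.
have s0 := IW1 ff; have s1 := IW1 ft; have s2 := IW1 tf; have s3 := IW1 tt.
set d := 'C(N, 2)%:R * e ^+ 2 in IHd *.
move: IHd; rewrite ler_norml => /andP [d1 d2].
have he : 0 <= e by lra.
have f1 : 0 <= (d - (rd w0 ff - rd (wW w0) ff)) * p ff by apply: mulr_ge0; lra.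
have f2 : 0 <= (d + (rd w0 ff - rd (wW w0) ff)) * p ff by apply: mulr_ge0; lra.
have f3 : 0 <= d * (1 - p ff) by apply: mulr_ge0; lra.
have g1 : 0 <= rd w0 ft * (e - p ft) by apply: mulr_ge0; lra.
have g2 : 0 <= rd w0 tf * (e - p tf) by apply: mulr_ge0; lra.
have g3 : 0 <= rd w0 tt * (e - p tt) by apply: mulr_ge0; lra.
have g4 : 0 <= (N%:R * e - (1 - rd w0 ff)) * e by apply: mulr_ge0; lra.
have q1 := mulr_ge0 r1 p1; have q2 := mulr_ge0 r2 p2; have q3 := mulr_ge0 r3 p3.
have y1 : 0 <= (1 - rd (wW w0) ff) * (1 - p ff) by apply: mulr_ge0; lra.
have y2 : 0 <= (1 - rd (wW w0) ff) * (e - (1 - p ff)) by apply: mulr_ge0; lra.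
have y3 : 0 <= (N%:R * e - (1 - rd (wW w0) ff)) * e by apply: mulr_ge0; lra.
have hX : (rd w0 ft + rd w0 tf + rd w0 tt) * e = (1 - rd w0 ff) * e.
  by congr (_ * _); lra.
have hY : (rd (wW w0) ft + rd (wW w0) tf + rd (wW w0) tt) * (1 - p ff) =
          (1 - rd (wW w0) ff) * (1 - p ff).
  by congr (_ * _); lra.
have hN : 0 <= N%:R * e ^+ 2 by rewrite mulr_ge0 ?ler0n ?sqr_ge0.
have ee : e ^+ 2 = e * e by rewrite expr2.
rewrite binS bin1 natrD (mulrDl ('C(N, 2)%:R)) -/d ler_norml ee; rewrite ee in hN; apply/andP; split; lra.
Qed.

End Real.


Local Open Scope complex_scope.

Section Final.
Variable R : realType.

Lemma ge0_RC (x : R[i]) : 0 <= x -> x = (complex.Re x)%:C.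
Proof. by move=> h; rewrite RRe_real // ger0_real. Qed.

Lemma normC_R (x : R) : `|x%:C| = `|x|%:C.
Proof.
case: (lerP 0 x) => h.
  by rewrite !ger0_norm // ler0c.
rewrite !ltr0_norm ?rmorphN // ltcR; exact: h.
Qed.

Lemma G_chainR n (w : 'I_n.+2 -> A -> R) (rhos : 'I_n.+2 -> op R[i] (bool * bool)%type) :
  (forall k a, pw (rhos k) a = (w k a)%:C) ->
  G (chain_state rhos) = (rd w ff)%:C.
Proof.
move=> hw.
have Et : forall k, tau (rhos k) = (tauF (w k))%:C.
  by move=> k; rewrite tauE /tauF !hw !rmorphD.
have Ex : forall k, xi (rhos k) = (xiF (w k))%:C.
  by move=> k; rewrite xiE /xiF !hw !rmorphD !rmorphN.
have Ez : forall k, zeta (rhos k) = (zetaF (w k))%:C.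
  by move=> k; rewrite zetaE /zetaF !hw !rmorphD !rmorphN.
have Ee : forall k, eta (rhos k) = (etaF (w k))%:C.
  by move=> k; rewrite etaE /etaF !hw !rmorphD !rmorphN.
rewrite G_chain (eq_bigr _ (fun k _ => Et k)) (eq_bigr _ (fun k _ => Ex k)).
rewrite (eq_bigr _ (fun k _ => Ez k)) (eq_bigr _ (fun k _ => Ee k)).
rewrite /rd /chF /= !expr0 !mul1r.
by rewrite fmorph_div rmorph_nat !rmorphD /= !rmorph_prod.
Qed.

End Final.

Theorem theorem2 (R : realType) :
  exists (K delta : R), 0 < delta /\
  forall (n : nat) (rhos : 'I_n.+2 -> op R[i] (bool * bool)%type) (P : protocol n)
         (eps : R),
    (forall k, is_density (rhos k)) ->
    swap_and_correct R[i] P ->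
    (forall k, 1 - fid (rhos k) < eps%:C) ->
    (n.+2)%:R * eps < delta ->
    `| fid (Lambda P (chain_state rhos))
       - fid (Lambda P (chain_state (fun k => werner (rhos k)))) |
      <= ('C(n.+2, 2)%:R * eps ^+ 2 + K * (n.+2)%:R ^+ 3 * eps ^+ 3)%:C.
Proof.
exists 0, 1; split; first exact: ltr01.
move=> n rhos P eps Hd HP He _.
pose wr k a := complex.Re (pw (rhos k) a).
have hpos : forall k a, 0 <= pw (rhos k) a.
  by move=> k a; case: (Hd k) => _ H _; exact: H.
have hw : forall k a, pw (rhos k) a = (wr k a)%:C.
  by move=> k a; apply: ge0_RC.
have hvalid : valid wr eps.
  split.
  - by move=> k a; rewrite -ler0c -hw.
  - move=> k; apply: complexI; rewrite rmorph1 /tauF !rmorphD /= -!hw -tauE.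
    by case: (Hd k).
  - move=> k; apply: ltW; rewrite -ltcR rmorphB rmorph1 /= -hw -fid_pw; exact: He.
have Ew : forall k a, pw (werner (rhos k)) a = (wW wr k a)%:C.
  move=> k a; rewrite pw_werner fid_pw hw /wW; case: (a == (false, false)) => //.
  by rewrite fmorph_div rmorphB rmorph1 rmorph_nat.
rewrite !(fid_Lambda_G HP) (G_chainR hw) (G_chainR Ew) -rmorphB normC_R.
rewrite !mul0r addr0 lecR.
exact: chain_diff hvalid.
Qed.
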